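(* Let $(\mathbf{x}_t,\mathbf{z}_t,\mathbf{y}_t)_{t\ge0}$ be generated by generalized Bregman ADMM under the standing assumptions and Assumption 1, and let $(\mathbf{x}^*,\mathbf{z}^*,\mathbf{y}^* )$ be a KKT point. Let $\sigma=\min\{1,m^{\frac{2}{p}-1}\}$, let $0<\gamma<\frac{\alpha\sigma}{2}$, and suppose $\tau\le(\alpha\sigma-2\gamma)\rho$. Then for every $t\ge0$, $$R(t+1)\le D(\mathbf{w}^*,\mathbf{w}_t)-D(\mathbf{w}^*,\mathbf{w}_{t+1}).$$
   Context: Problem: $f:\mathbb{R}^{n_1}\to\mathbb{R}\cup\{+\infty\}$ and $g:\mathbb{R}^{n_2}\to\mathbb{R}\cup\{+\infty\}$; $\mathbf{A}\in\mathbb{R}^{m\times n_1}$, $\mathbf{B}\in\mathbb{R}^{m\times n_2}$, $\mathbf{c}\in\mathbb{R}^m$; $\mathcal{X}\subseteq\mathbb{R}^{n_1}$, $\mathcal{Z}\subseteq\mathbb{R}^{n_2}$ convex; the problem is $\min f(\mathbf{x})+g(\mathbf{z})$ s.t. $\mathbf{x}\in\mathcal{X},\mathbf{z}\in\mathcal{Z},\mathbf{A}\mathbf{x}+\mathbf{B}\mathbf{z}=\mathbf{c}$. For a continuously differentiable, strictly convex function $\psi$ on (the relative interior of) a convex set, $B_\psi(\mathbf{u},\mathbf{v})=\psi(\mathbf{u})-\psi(\mathbf{v})-\langle\nabla\psi(\mathbf{v}),\mathbf{u}-\mathbf{v}\rangle\ge 0$. Three such functions are fixed: $\phi$ (on a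 convex subset of $\mathbb{R}^m$), $\varphi_{\mathbf{x}}$ (on $\mathbb{R}^{n_1}$ or a convex subset), $\varphi_{\mathbf{z}}$ (on $\mathbb{R}^{n_2}$ or a convex subset). Generalized Bregman ADMM: given $(\mathbf{x}_0,\mathbf{z}_0,\mathbf{y}_0)$ and parameters $\rho>0,\tau>0,\rho_{\mathbf{x}}\ge0,\rho_{\mathbf{z}}\ge0$, for $t\ge0$: $\mathbf{x}_{t+1}=\arg\min_{\mathbf{x}\in\mathcal{X}} f(\mathbf{x})+\langle\mathbf{y}_t,\mathbf{A}\mathbf{x}+\mathbf{B}\mathbf{z}_t-\mathbf{c}\rangle+\rho B_\phi(\mathbf{c}-\mathbf{A}\mathbf{x},\mathbf{B}\mathbf{z}_t)+\rho_{\mathbf{x}}B_{\varphi_{\mathbf{x}}}(\mathbf{x},\mathbf{x}_t)$; $\mathbf{z}_{t+1}=\arg\min_{\mathbf{z}\in\mathcal{Z}} g(\mathbf{z})+\langle\mathbf{y}_t,\mathbf{A}\mathbf{x}_{t+1}+\mathbf{B}\mathbf{z}-\mathbf{c}\rangle+\rho B_\phi(\mathbf{B}\mathbf{z},\mathbf{c}-\mathbf{A}\mathbf{x}_{t+1})+\rho_{\mathbf{z}}B_{\varphi_{\mathbf{z}}}(\mathbf{z},\mathbf{z}_t)$; $\mathbf{y}_{t+1}=\mathbf{y}_t+\tau(\mathbf{A}\mathbf{x}_{t+1}+\mathbf{B}\mathbf{z}_{t+1}-\mathbf{c})$. Standing assumptions: the minimizers exist; all Bregman divergences are evaluated at points where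 they are defined; and the minimizers satisfy the first-order optimality conditions $-\mathbf{A}^T\{\mathbf{y}_t+\rho(\nabla\phi(\mathbf{B}\mathbf{z}_t)-\nabla\phi(\mathbf{c}-\mathbf{A}\mathbf{x}_{t+1}))\}-\rho_{\mathbf{x}}(\nabla\varphi_{\mathbf{x}}(\mathbf{x}_{t+1})-\nabla\varphi_{\mathbf{x}}(\mathbf{x}_t))\in\partial f(\mathbf{x}_{t+1})$ and $-\mathbf{B}^T\{\mathbf{y}_t+\rho(\nabla\phi(\mathbf{B}\mathbf{z}_{t+1})-\nabla\phi(\mathbf{c}-\mathbf{A}\mathbf{x}_{t+1}))\}-\rho_{\mathbf{z}}(\nabla\varphi_{\mathbf{z}}(\mathbf{z}_{t+1})-\nabla\varphi_{\mathbf{z}}(\mathbf{z}_t))\in\partial g(\mathbf{z}_{t+1})$. Assumption 1: (a) $f,g$ are closed, proper, convex; (b) an optimal solution exists; (c) $\phi$ is $\alpha$-strongly convex w.r.t. a $p$-norm ($p>0$), i.e. $B_\phi(\mathbf{u},\mathbf{v})\ge\frac{\alpha}{2}\|\mathbf{u}-\mathbf{v}\|_p^2$ with $\alpha>0$. A KKT point is $(\mathbf{x}^*,\mathbf{z}^*,\mathbf{y}^* )$ with $-\mathbf{A}^T\mathbf{y}^*\in\partial f(\mathbf{x}^* )$, $-\mathbf{B}^T\mathbf{y}^*\in\partial g(\mathbf{z}^* )$, $\mathbf{A}\mathbf{x}^*+\mathbf{B}\mathbf{z}^*=\mathbf{c}$. With $\mathbf{w}_t=(\mathbf{x}_t,\mathbf{z}_t,\mathbf{y}_t)$,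 $\mathbf{w}^*=(\mathbf{x}^*,\mathbf{z}^*,\mathbf{y}^* )$ and $\gamma>0$: $R(t+1)=\frac{\rho_{\mathbf{x}}}{\rho}B_{\varphi_{\mathbf{x}}}(\mathbf{x}_{t+1},\mathbf{x}_t)+\frac{\rho_{\mathbf{z}}}{\rho}B_{\varphi_{\mathbf{z}}}(\mathbf{z}_{t+1},\mathbf{z}_t)+B_\phi(\mathbf{c}-\mathbf{A}\mathbf{x}_{t+1},\mathbf{B}\mathbf{z}_t)+\gamma\|\mathbf{A}\mathbf{x}_{t+1}+\mathbf{B}\mathbf{z}_{t+1}-\mathbf{c}\|_2^2$, $D(\mathbf{w}^*,\mathbf{w}_t)=\frac{1}{2\tau\rho}\|\mathbf{y}^*-\mathbf{y}_t\|_2^2+B_\phi(\mathbf{B}\mathbf{z}^*,\mathbf{B}\mathbf{z}_t)+\frac{\rho_{\mathbf{x}}}{\rho}B_{\varphi_{\mathbf{x}}}(\mathbf{x}^*,\mathbf{x}_t)+\frac{\rho_{\mathbf{z}}}{\rho}B_{\varphi_{\mathbf{z}}}(\mathbf{z}^*,\mathbf{z}_t)$. *)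

(* Defs.v *)
From mathcomp Require Import ssreflect ssrfun ssrbool eqtype ssrnat seq fintype bigop.
From Stdlib Require Import Reals.
Set Implicit Arguments. Unset Strict Implicit.
Local Open Scope R_scope.

Definition vec (n : nat) := 'I_n -> R.
Definition mat (m n : nat) := 'I_m -> 'I_n -> R.

Definition sumR (n : nat) (F : 'I_n -> R) : R := \big[Rplus/R0]_(i < n) F i.

Definition vadd n (u v : vec n) : vec n := fun i => u i + v i.
Definition vsub n (u v : vec n) : vec n := fun i => u i - v i.
Definition vscale n (a : R) (u : vec n) : vec n := fun i => a * u i.
Definition dot n (u v : vec n) : R := sumR (fun i => u i * v i).
Definition sqnorm2 n (u : vec n) : R := dot u u.
Definition mulmv m n (A : mat m n) (x : vec n) : vec m :=
  fun i => sumR (fun j => A i j * x j).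
Definition tmulmv m n (A : mat m n) (y : vec m) : vec n :=
  fun j => sumR (fun i => A i j * y i).

(* real power x^a for x >= 0, with the convention 0^a = 0 (a > 0) *)
Definition rpow (x a : R) : R :=
  if Rlt_dec 0 x then Rpower x a else 0.
Definition pnorm n (p : R) (u : vec n) : R :=
  rpow (sumR (fun i => rpow (Rabs (u i)) p)) (/ p).

(* Extended reals R U {+oo}: None stands for +oo *)
Definition ER := option R.
Definition ERadd (a : ER) (r : R) : ER :=
  match a with Some x => Some (x + r) | None => None end.
Definition ERle (a b : ER) : Prop :=
  match a, b with
  | _, None => True
  | None, Some _ => False
  | Some x, Some y => x <= y
  end.
Definition ERplus (a b : ER) : ER :=
  match a, b with Some x, Some y => Some (x + y) | _, _ => None end.

Definition convex_set n (S : vec n -> Prop) : Prop :=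
  forall u v (l : R), S u -> S v -> 0 <= l <= 1 ->
    S (vadd (vscale l u) (vscale (1 - l) v)).
Definition vconv n (u : nat -> vec n) (v : vec n) : Prop :=
  forall i, Un_cv (fun k => u k i) (v i).
Definition closed_set n (S : vec n -> Prop) : Prop :=
  forall (u : nat -> vec n) v, (forall k, S (u k)) -> vconv u v -> S v.

Definition proper_fun n (f : vec n -> ER) : Prop := exists x, f x <> None.
Definition convex_fun n (f : vec n -> ER) : Prop :=
  forall u v (l : R), 0 <= l <= 1 ->
    ERle (f (vadd (vscale l u) (vscale (1 - l) v)))
         (ERplus (option_map (Rmult l) (f u)) (option_map (Rmult (1 - l)) (f v))).
(* closed = lower semicontinuous = all sublevel sets closed *)
Definition closed_fun n (f : vec n -> ER) : Prop :=
  forall r : R, closed_set (fun x => ERle (f x) (Some r)).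

Definition subgrad n (f : vec n -> ER) (x g : vec n) : Prop :=
  f x <> None /\ forall u, ERle (ERadd (f x) (dot g (vsub u x))) (f u).

Definition breg n (psi : vec n -> R) (gpsi : vec n -> vec n) (u v : vec n) : R :=
  psi u - psi v - dot (gpsi v) (vsub u v).

(* psi is continuously differentiable (with gradient gpsi) and strictly convex
   on the convex set S; derivatives are taken within S (directional
   derivatives along directions pointing into S). *)
Definition bregman_generator n (S : vec n -> Prop) (psi : vec n -> R)
    (gpsi : vec n -> vec n) : Prop :=
  convex_set S /\
  (forall u v (l : R), S u -> S v -> u <> v -> 0 < l < 1 ->
     psi (vadd (vscale l u) (vscale (1 - l) v)) < l * psi u + (1 - l) * psi v) /\
  (forall v u, S v -> S u ->
     forall eps, eps > 0 -> exists delta, delta > 0 /\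
       forall s, 0 < s < delta ->
         Rabs ((psi (vadd v (vscale s (vsub u v))) - psi v) / s
               - dot (gpsi v) (vsub u v)) < eps) /\
  (forall v, S v -> forall eps, eps > 0 -> exists delta, delta > 0 /\
     forall u, S u -> (forall i, Rabs (u i - v i) < delta) ->
       forall i, Rabs (gpsi u i - gpsi v i) < eps).

(* The quantities R(t+1) and D(w^*, w_t) of the paper, written for generic
   arguments (x_{t+1}, z_{t+1}, x_t, z_t) and (x^*,z^*,y^*,x_t,z_t,y_t). *)
Definition Rquant n1 n2 m
    (phi : vec m -> R) (gphi : vec m -> vec m)
    (phix : vec n1 -> R) (gphix : vec n1 -> vec n1)
    (phiz : vec n2 -> R) (gphiz : vec n2 -> vec n2)
    (A : mat m n1) (B : mat m n2) (c : vec m) (rho rhox rhoz gamma : R)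
    (x1 : vec n1) (z1 : vec n2) (x0 : vec n1) (z0 : vec n2) : R :=
  rhox / rho * breg phix gphix x1 x0 + rhoz / rho * breg phiz gphiz z1 z0
  + breg phi gphi (vsub c (mulmv A x1)) (mulmv B z0)
  + gamma * sqnorm2 (vsub (vadd (mulmv A x1) (mulmv B z1)) c).

Definition Dquant n1 n2 m
    (phi : vec m -> R) (gphi : vec m -> vec m)
    (phix : vec n1 -> R) (gphix : vec n1 -> vec n1)
    (phiz : vec n2 -> R) (gphiz : vec n2 -> vec n2)
    (B : mat m n2) (rho tau rhox rhoz : R)
    (xs : vec n1) (zs : vec n2) (ys : vec m)
    (xt : vec n1) (zt : vec n2) (yt : vec m) : R :=
  / (2 * tau * rho) * sqnorm2 (vsub ys yt)
  + breg phi gphi (mulmv B zs) (mulmv B zt)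
  + rhox / rho * breg phix gphix xs xt + rhoz / rho * breg phiz gphiz zs zt.

(* Main.v *)
Require Import Defs.
From HB Require Import structures.
From mathcomp Require Import ssreflect ssrfun ssrbool eqtype ssrnat seq fintype bigop.
From Stdlib Require Import Reals Lra FunctionalExtensionality.
Local Open Scope R_scope.

HB.instance Definition _ := Monoid.isComLaw.Build R R0 Rplus (fun a b c => esym (Rplus_assoc a b c)) Rplus_comm Rplus_0_l.

Lemma sumR_add n (F G : 'I_n -> R) : sumR (fun i => F i + G i) = sumR F + sumR G.
Proof. by rewrite /sumR big_split. Qed.

Lemma sumR_scale n a (F : 'I_n -> R) : sumR (fun i => a * F i) = a * sumR F.
Proof.
rewrite /sumR; elim/big_rec2: _ => [|i y1 y2 _ ->]; first by rewrite Rmult_0_r.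
by rewrite Rmult_plus_distr_l.
Qed.

Lemma sumR_le n (F G : 'I_n -> R) : (forall i, F i <= G i) -> sumR F <= sumR G.
Proof.
move=> H; rewrite /sumR; elim/big_rec2: _ => [|i y1 y2 _ Hy]; first lra.
by apply Rplus_le_compat.
Qed.

Lemma sumR_const n c : sumR (fun _ : 'I_n => c) = INR n * c.
Proof.
rewrite /sumR big_const_ord; elim: n => [|n IH]; first (simpl; lra).
rewrite S_INR /= IH; lra.
Qed.

Lemma sumR_ext n (F G : 'I_n -> R) : (forall i, F i = G i) -> sumR F = sumR G.
Proof. by move=> H; rewrite /sumR; apply: eq_bigr => i _. Qed.

Lemma sumR_sub n (F G : 'I_n -> R) : sumR (fun i => F i - G i) = sumR F - sumR G.
Proof.
have -> : sumR F = sumR (fun i => F i - G i) + sumR G.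
  by rewrite -sumR_add; apply sumR_ext => i; ring.
ring.
Qed.

Lemma sumR_swap m n (F : 'I_m -> 'I_n -> R) :
  sumR (fun i => sumR (fun j => F i j)) = sumR (fun j => sumR (fun i => F i j)).
Proof. by rewrite /sumR exchange_big. Qed.

Lemma dot_addl n (u v w : vec n) : dot (vadd u v) w = dot u w + dot v w.
Proof. rewrite /dot -sumR_add; apply sumR_ext => i; rewrite /vadd; ring. Qed.
Lemma dot_subl n (u v w : vec n) : dot (vsub u v) w = dot u w - dot v w.
Proof.
rewrite /dot -sumR_sub; apply sumR_ext => i; rewrite /vsub; ring.
Qed.
Lemma dot_scalel n a (u w : vec n) : dot (vscale a u) w = a * dot u w.
Proof. rewrite /dot -sumR_scale; apply sumR_ext => i; rewrite /vscale; ring. Qed.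
Lemma dot_comm n (u w : vec n) : dot u w = dot w u.
Proof. rewrite /dot; apply sumR_ext => i; ring. Qed.
Lemma dot_addr n (u v w : vec n) : dot w (vadd u v) = dot w u + dot w v.
Proof. by rewrite dot_comm dot_addl !(@dot_comm _ w). Qed.
Lemma dot_subr n (u v w : vec n) : dot w (vsub u v) = dot w u - dot w v.
Proof. by rewrite dot_comm dot_subl !(@dot_comm _ w). Qed.
Lemma dot_scaler n a (u w : vec n) : dot w (vscale a u) = a * dot w u.
Proof. by rewrite dot_comm dot_scalel (@dot_comm _ w). Qed.
Lemma dot_tmul m n (A : mat m n) (w : vec m) (v : vec n) :
  dot (tmulmv A w) v = dot w (mulmv A v).
Proof.
rewrite /dot /tmulmv /mulmv.
transitivity (sumR (fun j => sumR (fun i => A i j * w i * v j))).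
  apply sumR_ext => j; rewrite Rmult_comm -sumR_scale; apply sumR_ext => i; ring.
rewrite -sumR_swap; apply sumR_ext => i; rewrite -sumR_scale; apply sumR_ext => j; ring.
Qed.
Lemma mulmv_sub m n (A : mat m n) u v : mulmv A (vsub u v) = vsub (mulmv A u) (mulmv A v).
Proof.
apply functional_extensionality => i; rewrite /mulmv /vsub -sumR_sub.
apply sumR_ext => j; ring.
Qed.

Lemma three_point n (psi : vec n -> R) gpsi a b w :
  dot (vsub (gpsi a) (gpsi b)) (vsub a w) =
  breg psi gpsi w a + breg psi gpsi a b - breg psi gpsi w b.
Proof. rewrite /breg !dot_subl !dot_subr; ring. Qed.

Lemma mono n (f : vec n -> ER) a ga b gb :
  subgrad f a ga -> subgrad f b gb -> dot ga (vsub b a) + dot gb (vsub a b) <= 0.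
Proof.
case=> Ha Ha' [Hb Hb']; move: (Ha' b) (Hb' a).
case: (f a) Ha => // Fa _; case: (f b) Hb => // Fb _ /= H1 H2; lra.
Qed.

Lemma ln_le' x y : 0 < x -> x <= y -> ln x <= ln y.
Proof. move=> Hx [H|->]; [left; exact: ln_increasing | lra]. Qed.

Lemma tangent x y : exp x * (1 + y - x) <= exp y.
Proof.
have -> : exp y = exp x * exp (y - x) by rewrite -exp_plus; f_equal; ring.
apply Rmult_le_compat_l; first by left; apply exp_pos.
have := exp_ineq1_le (y - x); lra.
Qed.

Lemma bernoulli q L : 1 <= q -> 1 + q * (exp L - 1) <= exp (q * L).
Proof.
move=> Hq.
have H1 := tangent L (q * L).
have H2 := tangent L 0; rewrite exp_0 in H2.
have H3 : (q - 1) * (exp L * (1 + 0 - L)) <= (q - 1) * 1.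
  by apply Rmult_le_compat_l; lra.
nra.
Qed.

Lemma rpow_pos x a : 0 < x -> rpow x a = exp (a * ln x).
Proof. by move=> Hx; rewrite /rpow; case: Rlt_dec. Qed.
Lemma rpow_nonpos x a : x <= 0 -> rpow x a = 0.
Proof. by move=> Hx; rewrite /rpow; case: Rlt_dec => // H; lra. Qed.

Lemma rpow_abs x p : rpow (Rabs x) p = rpow (x * x) (p / 2).
Proof.
case: (Req_dec x 0) => [->|Hx].
  rewrite Rabs_R0 Rmult_0_l !rpow_nonpos //; lra.
have Ha : 0 < Rabs x by apply Rabs_pos_lt.
have -> : x * x = Rabs x * Rabs x by rewrite -Rabs_mult Rabs_right //; nra.
rewrite !rpow_pos; try nra.
rewrite ln_mult //; f_equal; field.
Qed.

Lemma key_le1 q v S : 0 < q -> q <= 1 -> 0 <= v -> v <= S -> 0 < S ->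
  v * exp ((q - 1) * ln S) <= rpow v q.
Proof.
move=> Hq Hq1 Hv HvS HS.
case: (Req_dec v 0) => [->|Hv0].
  rewrite rpow_nonpos; lra.
have Hvp : 0 < v by lra.
rewrite rpow_pos //.
have -> : exp (q * ln v) = v * exp ((q - 1) * ln v).
  by rewrite -{2}(exp_ln v) // -exp_plus; f_equal; ring.
apply Rmult_le_compat_l; first lra.
have Hl : ln v <= ln S by apply ln_le'.
case: (Req_dec q 1) => [->|Hq1'].
  rewrite !Rminus_diag !Rmult_0_l; lra.
case: Hl => [Hl|->]; last lra.
left; apply exp_increasing; nra.
Qed.

Lemma key_ge1 q v a : 1 <= q -> 0 <= v -> 0 < a ->
  exp (q * ln a) + q * exp ((q - 1) * ln a) * (v - a) <= rpow v q.
Proof.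
move=> Hq Hv Ha.
have Ea : a * exp ((q - 1) * ln a) = exp (q * ln a).
  by rewrite -{1}(exp_ln a) // -exp_plus; f_equal; ring.
case: (Req_dec v 0) => [->|Hv0].
  rewrite rpow_nonpos; last lra.
  have := exp_pos (q * ln a); nra.
have Hvp : 0 < v by lra.
rewrite rpow_pos //.
have B := bernoulli q (ln v - ln a) Hq.
have E1 : exp (q * ln v) = exp (q * ln a) * exp (q * (ln v - ln a)).
  by rewrite -exp_plus; f_equal; ring.
have E2 : exp ((q - 1) * ln a) * v = exp (q * ln a) * exp (ln v - ln a).
  by rewrite -{1}(exp_ln v) // -!exp_plus; f_equal; ring.
have Ep := exp_pos (q * ln a).
have H := Rmult_le_compat_l _ _ _ (Rlt_le _ _ Ep) B.
rewrite E1; nra.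
Qed.

Lemma sumR_ge0 n (F : 'I_n -> R) : (forall i, 0 <= F i) -> 0 <= sumR F.
Proof.
move=> H; have := @sumR_le _ (fun _ => 0) F H; rewrite sumR_const; lra.
Qed.

Lemma pnorm_ge m p (u : vec m) : 0 < p ->
  Rmin 1 (rpow (INR m) (2 / p - 1)) * sqnorm2 u <= pnorm p u ^ 2.
Proof.
move=> Hp.
have Hm0 : sqnorm2 u <> 0 -> (0 < m)%nat.
  by case: m u => // u; rewrite /sqnorm2 /dot /sumR big_ord0.
set S := sqnorm2 u.
have HS0 : 0 <= S by apply sumR_ge0 => i; nra.
case: (Req_dec S 0) => [->|HS1].
  rewrite Rmult_0_r; apply pow2_ge_0.
have HS : 0 < S by lra.
have Hm := Hm0 HS1.
have HmR : 0 < INR m by apply lt_0_INR; apply/ltP.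
set q := p / 2.
set T := sumR (fun i => rpow (Rabs (u i)) p).
have ET : T = sumR (fun i => rpow (u i * u i) q).
  by apply sumR_ext => i; rewrite rpow_abs.
have Hv : forall i, 0 <= u i * u i by move=> i; nra.
have HvS : forall i, u i * u i <= S.
  move=> i; rewrite /S /sqnorm2 /dot /sumR (bigD1 i) //=.
  have H0 : 0 <= \big[Rplus/R0]_(j < m | j != i) (u j * u j).
    by elim/big_ind: _ => //; [lra | move=> a b; lra].
  move: H0; set X := bigop _ _ _; lra.
have Epn : forall T0, 0 < T0 -> rpow T0 (/ p) ^ 2 = exp (2 / p * ln T0).
  move=> T0 HT0; rewrite rpow_pos // /= Rmult_1_r -exp_plus; f_equal; field; lra.
case: (Rle_lt_dec p 2) => Hp2.
-
  have HT : exp (q * ln S) <= T.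
    rewrite ET.
    have -> : exp (q * ln S) = sumR (fun i => u i * u i * exp ((q - 1) * ln S)).
      rewrite (@sumR_ext _ _ (fun i => exp ((q - 1) * ln S) * (u i * u i))); last by move=> i; rewrite Rmult_comm.
      rewrite sumR_scale -/(dot u u) -/(sqnorm2 u) -/S.
      by rewrite -{3}(exp_ln S) // -exp_plus; f_equal; ring.
    apply sumR_le => i; apply key_le1 => //; rewrite /q; lra.
  have HTp : 0 < T by have := exp_pos (q * ln S); lra.
  rewrite /pnorm -/T Epn //.
  have Hle : S <= exp (2 / p * ln T).
    rewrite -{1}(exp_ln S) //.
    have Hl : ln (exp (q * ln S)) <= ln T by apply ln_le' => //; apply exp_pos.
    rewrite ln_exp in Hl.
    have : ln S <= 2 / p * ln T.
      have -> : ln S = 2 / p * (q * ln S) by rewrite /q; field; lra.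
      apply Rmult_le_compat_l => //; apply Rlt_le, Rdiv_lt_0_compat; lra.
    case=> [H|->]; [left; exact: exp_increasing | lra].
  have := Rmin_l 1 (rpow (INR m) (2 / p - 1)); nra.
-
  set a := S / INR m.
  have Ha : 0 < a by apply Rdiv_lt_0_compat.
  have HT : INR m * exp (q * ln a) <= T.
    rewrite ET.
    have -> : INR m * exp (q * ln a) =
      sumR (fun i => exp (q * ln a) + q * exp ((q - 1) * ln a) * (u i * u i - a)).
      rewrite sumR_add sumR_const.
      rewrite sumR_scale sumR_sub sumR_const -/(dot u u) -/(sqnorm2 u) -/S /a.
      field; lra.
    apply sumR_le => i; apply key_ge1 => //; rewrite /q; lra.
  have HTp : 0 < T by have := exp_pos (q * ln a); nra.
  rewrite /pnorm -/T Epn //.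
  have Hle : exp ((2 / p - 1) * ln (INR m)) * S <= exp (2 / p * ln T).
    have Hl : ln (INR m * exp (q * ln a)) <= ln T.
      by apply ln_le' => //; have := exp_pos (q * ln a); nra.
    rewrite ln_mult // ?ln_exp in Hl; last by apply exp_pos.
    have E : exp ((2 / p - 1) * ln (INR m)) * S = exp (2 / p * (ln (INR m) + q * ln a)).
      rewrite -{1}(exp_ln S) // -exp_plus; f_equal.
      rewrite /a /Rdiv ln_mult //; last by apply Rinv_0_lt_compat.
      rewrite ln_Rinv // /q; field; lra.
    rewrite E.
    have : 2 / p * (ln (INR m) + q * ln a) <= 2 / p * ln T.
      apply Rmult_le_compat_l => //; apply Rlt_le, Rdiv_lt_0_compat; lra.
    case=> [H|->]; [left; exact: exp_increasing | lra].
  have := Rmin_r 1 (rpow (INR m) (2 / p - 1)); rewrite rpow_pos //; nra.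
Qed.
Lemma final_arith rho tau rhox rhoz gamma al Nt N1 Rn Q E1 E2
  bx10 bxs1 bxs0 bz10 bzs1 bzs0 bA0 bs0 bsA bs1 b1A :
  rho > 0 -> tau > 0 -> 0 <= Rn -> tau <= (al - 2 * gamma) * rho ->
  al / 2 * Rn <= b1A -> N1 = Nt - 2 * tau * Q + tau ^ 2 * Rn -> Q = E1 + E2 ->
  rhox * (bxs1 + bx10 - bxs0) + rho * (bsA + bA0 - bs0) <= E1 ->
  rhoz * (bzs1 + bz10 - bzs0) + rho * (bs1 + b1A - bsA) <= E2 ->
  rhox / rho * bx10 + rhoz / rho * bz10 + bA0 + gamma * Rn <=
  (/ (2 * tau * rho) * Nt + bs0 + rhox / rho * bxs0 + rhoz / rho * bzs0) -
  (/ (2 * tau * rho) * N1 + bs1 + rhox / rho * bxs1 + rhoz / rho * bzs1).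
Proof.
move=> Hr Ht HR Htau Hb EN EQ HX HZ.
set K := Q - tau / 2 * Rn + rho * (bs0 - bs1) + rhox * (bxs0 - bxs1 - bx10)
  + rhoz * (bzs0 - bzs1 - bz10) - rho * bA0 - rho * gamma * Rn.
have HK : 0 <= K.
  have H1 : tau * Rn <= (al - 2 * gamma) * rho * Rn by apply Rmult_le_compat_r.
  have H2 : rho * (al / 2 * Rn) <= rho * b1A by apply Rmult_le_compat_l; lra.
  rewrite /K; lra.
have E : (/ (2 * tau * rho) * Nt + bs0 + rhox / rho * bxs0 + rhoz / rho * bzs0) -
  (/ (2 * tau * rho) * N1 + bs1 + rhox / rho * bxs1 + rhoz / rho * bzs1)
  - (rhox / rho * bx10 + rhoz / rho * bz10 + bA0 + gamma * Rn) = / rho * K.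
  rewrite EN /K; field; lra.
have : 0 <= / rho * K by apply Rmult_le_pos => //; left; apply Rinv_0_lt_compat.
lra.
Qed.
Arguments mono {n f a ga b gb}.
Arguments three_point {n}.
Lemma sq_expand0 n (w r : vec n) a :
  sqnorm2 (vsub w (vscale a r)) = sqnorm2 w - 2 * a * dot w r + a ^ 2 * sqnorm2 r.
Proof.
rewrite /sqnorm2 !(dot_subl, dot_subr, dot_scalel, dot_scaler) (@dot_comm _ r w); ring.
Qed.
Lemma sq_expand n (u v r : vec n) a :
  sqnorm2 (vsub u (vadd v (vscale a r))) =
  sqnorm2 (vsub u v) - 2 * a * dot (vsub u v) r + a ^ 2 * sqnorm2 r.
Proof.
have -> : vsub u (vadd v (vscale a r)) = vsub (vsub u v) (vscale a r).
  by apply functional_extensionality => i; rewrite /vsub /vadd /vscale; ring.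
exact: sq_expand0.
Qed.

Theorem lemma2
  (n1 n2 m : nat)
  (f : vec n1 -> ER) (g : vec n2 -> ER)
  (A : mat m n1) (B : mat m n2) (c : vec m)
  (X : vec n1 -> Prop) (Z : vec n2 -> Prop)
  (HX : convex_set X) (HZ : convex_set Z)
  (* the three Bregman generators and their domains *)
  (Sphi : vec m -> Prop) (phi : vec m -> R) (gphi : vec m -> vec m)
  (Sx : vec n1 -> Prop) (phix : vec n1 -> R) (gphix : vec n1 -> vec n1)
  (Sz : vec n2 -> Prop) (phiz : vec n2 -> R) (gphiz : vec n2 -> vec n2)
  (Hphi : bregman_generator Sphi phi gphi)
  (Hphix : bregman_generator Sx phix gphix)
  (Hphiz : bregman_generator Sz phiz gphiz)
  (* parameters *)
  (rho tau rhox rhoz : R)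
  (Hrho : rho > 0) (Htau : tau > 0) (Hrhox : rhox >= 0) (Hrhoz : rhoz >= 0)
  (* the iterates *)
  (x : nat -> vec n1) (z : nat -> vec n2) (y : nat -> vec m)
  (* Bregman divergences are evaluated where defined *)
  (Hdx : forall t, Sx (x t)) (Hdz : forall t, Sz (z t))
  (HdBz : forall t, Sphi (mulmv B (z t)))
  (HdAx : forall t, Sphi (vsub c (mulmv A (x t.+1))))
  (* x-update: x_{t+1} is a minimizer *)
  (Hxmin : forall t, X (x t.+1) /\
     forall u, X u -> Sx u -> Sphi (vsub c (mulmv A u)) ->
       ERle (ERadd (f (x t.+1))
               (dot (y t) (vsub (vadd (mulmv A (x t.+1)) (mulmv B (z t))) c)
                + rho * breg phi gphi (vsub c (mulmv A (x t.+1))) (mulmv B (z t))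
                + rhox * breg phix gphix (x t.+1) (x t)))
            (ERadd (f u)
               (dot (y t) (vsub (vadd (mulmv A u) (mulmv B (z t))) c)
                + rho * breg phi gphi (vsub c (mulmv A u)) (mulmv B (z t))
                + rhox * breg phix gphix u (x t))))
  (* z-update: z_{t+1} is a minimizer *)
  (Hzmin : forall t, Z (z t.+1) /\
     forall v, Z v -> Sz v -> Sphi (mulmv B v) ->
       ERle (ERadd (g (z t.+1))
               (dot (y t) (vsub (vadd (mulmv A (x t.+1)) (mulmv B (z t.+1))) c)
                + rho * breg phi gphi (mulmv B (z t.+1)) (vsub c (mulmv A (x t.+1)))
                + rhoz * breg phiz gphiz (z t.+1) (z t)))
            (ERadd (g v)
               (dot (y t) (vsub (vadd (mulmv A (x t.+1)) (mulmv B v)) c)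
                + rho * breg phi gphi (mulmv B v) (vsub c (mulmv A (x t.+1)))
                + rhoz * breg phiz gphiz v (z t))))
  (* dual update *)
  (Hyupd : forall t, y t.+1 =
     vadd (y t) (vscale tau (vsub (vadd (mulmv A (x t.+1)) (mulmv B (z t.+1))) c)))
  (* first-order optimality conditions of the subproblems *)
  (Hfox : forall t, subgrad f (x t.+1)
     (vsub (vscale (-1) (tmulmv A
              (vadd (y t) (vscale rho (vsub (gphi (mulmv B (z t)))
                                            (gphi (vsub c (mulmv A (x t.+1)))))))))
           (vscale rhox (vsub (gphix (x t.+1)) (gphix (x t))))))
  (Hfoz : forall t, subgrad g (z t.+1)
     (vsub (vscale (-1) (tmulmv B
              (vadd (y t) (vscale rho (vsub (gphi (mulmv B (z t.+1)))
                                            (gphi (vsub c (mulmv A (x t.+1)))))))))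
           (vscale rhoz (vsub (gphiz (z t.+1)) (gphiz (z t))))))
  (* Assumption 1 *)
  (Hf : closed_fun f /\ proper_fun f /\ convex_fun f)
  (Hg : closed_fun g /\ proper_fun g /\ convex_fun g)
  (Hopt : exists xo zo, X xo /\ Z zo /\
     vadd (mulmv A xo) (mulmv B zo) = c /\
     forall u v, X u -> Z v -> vadd (mulmv A u) (mulmv B v) = c ->
       ERle (ERplus (f xo) (g zo)) (ERplus (f u) (g v)))
  (alpha p : R) (Halpha : alpha > 0) (Hp : p > 0)
  (Hsc : forall u v, Sphi u -> Sphi v ->
     breg phi gphi u v >= alpha / 2 * (pnorm p (vsub u v)) ^ 2)
  (* a KKT point (at which the Bregman divergences in D are defined) *)
  (xs : vec n1) (zs : vec n2) (ys : vec m)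
  (Hkx : subgrad f xs (vscale (-1) (tmulmv A ys)))
  (Hkz : subgrad g zs (vscale (-1) (tmulmv B ys)))
  (Hkc : vadd (mulmv A xs) (mulmv B zs) = c)
  (Hdxs : Sx xs) (Hdzs : Sz zs) (HdBzs : Sphi (mulmv B zs))
  (* step-size conditions *)
  (gamma : R)
  (Hgamma : 0 < gamma < alpha * Rmin 1 (rpow (INR m) (2 / p - 1)) / 2)
  (Htau_le : tau <= (alpha * Rmin 1 (rpow (INR m) (2 / p - 1)) - 2 * gamma) * rho) :
  forall t : nat,
    Rquant phi gphi phix gphix phiz gphiz A B c rho rhox rhoz gamma
      (x t.+1) (z t.+1) (x t) (z t)
    <= Dquant phi gphi phix gphix phiz gphiz B rho tau rhox rhoz xs zs ys (x t) (z t) (y t)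
       - Dquant phi gphi phix gphix phiz gphiz B rho tau rhox rhoz xs zs ys
           (x t.+1) (z t.+1) (y t.+1).
Proof.
move=> t.
subst c.
have HXm := mono (Hfox t) Hkx.
have HZm := mono (Hfoz t) Hkz.
have HSC := Hsc _ _ (HdBz t.+1) (HdAx t).
rewrite Hyupd.
move: HXm HZm HSC.
set x1 := x t.+1; set x0 := x t; set z1 := z t.+1; set z0 := z t.
set yt := y t.
set Ax1 := mulmv A x1; set Axs := mulmv A xs; set Bz1 := mulmv B z1.
set Bz0 := mulmv B z0; set Bzs := mulmv B zs.
set cA := vsub (vadd Axs Bzs) Ax1.
set r := vsub (vadd Ax1 Bz1) (vadd Axs Bzs).
move=> HXm HZm HSC.
have T1 := f_equal (Rmult rhox) (three_point phix gphix x1 x0 xs).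
have T2 := f_equal (Rmult rho) (three_point phi gphi cA Bz0 Bzs).
have T3 := f_equal (Rmult rhoz) (three_point phiz gphiz z1 z0 zs).
have T4 := f_equal (Rmult rho) (three_point phi gphi Bz1 cA Bzs).
have HXc : rhox * (breg phix gphix xs x1 + breg phix gphix x1 x0 - breg phix gphix xs x0)
   + rho * (breg phi gphi Bzs cA + breg phi gphi cA Bz0 - breg phi gphi Bzs Bz0)
   <= dot (vsub ys yt) (vsub Ax1 Axs).
  rewrite -T1 -T2.
  move: HXm.
  rewrite !(dot_subl, dot_subr, dot_addl, dot_addr, dot_scalel, dot_scaler, dot_tmul).
  fold Ax1 Axs Bz1 Bz0 Bzs; lra.
have HZc : rhoz * (breg phiz gphiz zs z1 + breg phiz gphiz z1 z0 - breg phiz gphiz zs z0)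
   + rho * (breg phi gphi Bzs Bz1 + breg phi gphi Bz1 cA - breg phi gphi Bzs cA)
   <= dot (vsub ys yt) (vsub Bz1 Bzs).
  rewrite -T3 -T4.
  move: HZm.
  rewrite !(dot_subl, dot_subr, dot_addl, dot_addr, dot_scalel, dot_scaler, dot_tmul).
  fold Ax1 Axs Bz1 Bz0 Bzs; lra.
have Er : vsub Bz1 cA = r.
  by apply functional_extensionality => i; rewrite /r /cA /vsub /vadd; ring.
rewrite Er in HSC.
have HPN := @pnorm_ge m p r Hp.
set sig := Rmin 1 (rpow (INR m) (2 / p - 1)) in HPN Hgamma Htau_le.
have HRn : 0 <= sqnorm2 r by apply sumR_ge0 => i; nra.
rewrite /Rquant /Dquant -/x1 -/x0 -/z1 -/z0 -/yt.
fold Ax1 Axs Bz1 Bz0 Bzs cA r.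
eapply (final_arith rho tau rhox rhoz gamma (alpha * sig)) with (b1A := breg phi gphi Bz1 cA) (E1 := dot (vsub ys yt) (vsub Ax1 Axs)) (E2 := dot (vsub ys yt) (vsub Bz1 Bzs)) (Q := dot (vsub ys yt) r).
- exact Hrho.
- exact Htau.
- exact HRn.
- exact Htau_le.
- have : alpha / 2 * (sig * sqnorm2 r) <= alpha / 2 * pnorm p r ^ 2.
    by apply Rmult_le_compat_l => //; lra.
  lra.
- apply sq_expand.
- rewrite /r !(dot_subr, dot_addr); ring.
- exact HXc.
- exact HZc.
Qed.
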